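(* Let $n\ge 1$ and let $\mathcal{Z}=\{(\boldsymbol{z}_i,y_i)\}_{i=1}^{n}$ be a finite set of labeled representations with $\boldsymbol{z}_i\in\mathbb{R}^{d}$, $\|\boldsymbol{z}_i\|_2=1$ for all $i$, and labels $y_i\in\{1,\dots,N_C\}$, every one of the $N_C$ classes being nonempty. For each class $j$ let $\mathcal{C}_j=\{\boldsymbol{z}_i : y_i=j\}$ and let the prototype be $\boldsymbol{c}_j=\frac{1}{|\mathcal{C}_j|}\sum_{\boldsymbol{z}\in\mathcal{C}_j}\boldsymbol{z}$. Let the similarity measure $d(\cdot,\cdot)$ be the cosine similarity, and consider the nearest centroid classifier loss \[ \mathcal{L}(\theta)=-\frac{1}{n}\sum_{i=1}^{n}\log\frac{e^{d(\boldsymbol{z}_i,\boldsymbol{c}_{y_i})}}{\sum_{j=1}^{N_C}e^{d(\boldsymbol{z}_i,\boldsymbol{c}_j)}}. \] Then \[ \mathcal{L}(\theta)\ \ge\ -\frac{1}{n}\sum_{i=1}^{n}\boldsymbol{z}_i^{\top}\boldsymbol{c}_{y_i}+\frac{\alpha}{n}\sum_{i=1}^{n}\sum_{\boldsymbol{z}'\in\mathcal{Z}}\boldsymbol{z}_i^{\top}\boldsymbol{z}', \] where $\boldsymbol{z}'$ ranges over (an independent copy of) the representations in $\mathcal{Z}$, and $\alpha$ is any constant satisfying $0\le\alpha<\frac{1}{N_C|\mathcal{C}_j|}$ for all $j$.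
   Context: The representations $\boldsymbol{z}_i$ are obtained as $\boldsymbol{z}_i=h_\theta(f_{\phi^*}(\boldsymbol{x}_i))$ from a frozen backbone $f_{\phi^*}$ and a trainable head $h_\theta$ with parameters $\theta$; the loss is viewed as a function of $\theta$. In the bound, $\boldsymbol{c}_{y_i}$ denotes the prototype of the class of sample $i$. *)

(* Defs.v *)
From HB Require Import structures.
From mathcomp Require Import all_boot all_order all_algebra.
From mathcomp Require Import all_classical all_reals all_analysis.
Set Implicit Arguments. Unset Strict Implicit. Unset Printing Implicit Defensive.
Import Order.TTheory GRing.Theory Num.Theory.
Local Open Scope ring_scope.

Definition dotp (R : realType) (d : nat) (u v : 'rV[R]_d) : R :=
  \sum_(k < d) u 0 k * v 0 k.

Definition norm2 (R : realType) (d : nat) (u : 'rV[R]_d) : R :=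
  Num.sqrt (dotp u u).

(* Cosine similarity; by MathComp's convention x / 0 = 0, it is 0 when a
   vector is zero. *)
Definition cos_sim (R : realType) (d : nat) (u v : 'rV[R]_d) : R :=
  dotp u v / (norm2 u * norm2 v).

Definition class_idx (n NC : nat) (y : 'I_n -> 'I_NC) (j : 'I_NC) : {set 'I_n} :=
  [set i | y i == j].

Definition prototype (R : realType) (d n NC : nat) (z : 'I_n -> 'rV[R]_d)
  (y : 'I_n -> 'I_NC) (j : 'I_NC) : 'rV[R]_d :=
  (#|class_idx y j|%:R)^-1 *: \sum_(i < n | y i == j) z i.

Definition ncc_loss (R : realType) (d n NC : nat) (z : 'I_n -> 'rV[R]_d)
  (y : 'I_n -> 'I_NC) : R :=
  - (n%:R)^-1 * \sum_(i < n)
      ln (expR (cos_sim (z i) (prototype z y (y i))) /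
          \sum_(j < NC) expR (cos_sim (z i) (prototype z y j))).

(* Main.v *)
Require Import Defs.
From mathcomp Require Import all_boot all_order all_algebra.
From mathcomp Require Import all_classical all_reals all_analysis.
From mathcomp Require Import ring lra.
Import Order.TTheory GRing.Theory Num.Theory.
Local Open Scope ring_scope.

Lemma cs_sum (R : realType) (m : nat) (a : 'I_m -> R) :
  (\sum_(j < m) a j) ^+ 2 <= m%:R * \sum_(j < m) a j ^+ 2.
Proof.
have H : 0 <= \sum_(j < m) \sum_(l < m) (a j - a l) ^+ 2.
  by apply: sumr_ge0 => j _; apply: sumr_ge0 => l _; apply: sqr_ge0.
have E1 : \sum_(j < m) \sum_(l < m) (a j - a l) ^+ 2 =
   \sum_(j < m) \sum_(l < m) a j ^+ 2 + \sum_(j < m) \sum_(l < m) a l ^+ 2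
   - 2%:R * \sum_(j < m) \sum_(l < m) (a j * a l).
  rewrite mulr_sumr -big_split -sumrB /=; apply: eq_bigr => j _.
  rewrite mulr_sumr -big_split -sumrB /=; apply: eq_bigr => l _.
  rewrite sqrrB; ring.
have E2 : \sum_(j < m) \sum_(l < m) (a j * a l) = (\sum_(j < m) a j) ^+ 2.
  rewrite expr2 mulr_suml; apply: eq_bigr => j _; by rewrite mulr_sumr.
have E3 : \sum_(j < m) \sum_(l < m) a l ^+ 2 = m%:R * \sum_(j < m) a j ^+ 2.
  by rewrite sumr_const card_ord mulr_natl.
have E4 : \sum_(j < m) \sum_(l < m) a j ^+ 2 = m%:R * \sum_(j < m) a j ^+ 2.
  rewrite mulr_sumr; apply: eq_bigr => j _.
  by rewrite sumr_const card_ord mulr_natl.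
rewrite E1 E2 E3 E4 in H.
have : 2%:R * (\sum_(j < m) a j) ^+ 2 <= 2%:R * (m%:R * \sum_(j < m) a j ^+ 2).
  rewrite -subr_ge0; move: H; congr (0 <= _); ring.
by rewrite ler_pM2l.
Qed.

Lemma key (R : realType) (n NC : nat) (y : 'I_n -> 'I_NC) (alpha : R)
  (x : 'I_n -> R) :
  (forall j : 'I_NC, exists i : 'I_n, y i = j) ->
  0 <= alpha ->
  (forall j : 'I_NC, alpha < (NC%:R * #|class_idx y j|%:R)^-1) ->
  alpha * (\sum_(i < n) x i) ^+ 2 <=
  \sum_(i < n) x i * ((#|class_idx y (y i)|%:R)^-1 *
                      \sum_(l < n | y l == y i) x l).
Proof.
move=> surj a0 ha.
set w := fun j => (#|class_idx y j|%:R : R).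
set s := fun j : 'I_NC => \sum_(l < n | y l == j) x l.
have wpos : forall j, 0 < w j.
  move=> j; rewrite /w ltr0n card_gt0; apply/set0Pn.
  by case: (surj j) => i <-; exists i; rewrite inE.
have L : \sum_(i < n) x i * ((w (y i))^-1 * s (y i)) =
         \sum_(j < NC) s j * (w j)^-1 * s j.
  rewrite (partition_big y predT) //=; apply: eq_bigr => j _.
  rewrite /s mulr_suml mulr_suml; apply: eq_bigr => i /eqP ->.
  by rewrite mulrA.
have S : \sum_(i < n) x i = \sum_(j < NC) s j.
  by rewrite (partition_big y predT).
rewrite -/w -/s L S.
have CS := ler_wpM2l a0 (@cs_sum _ _ s).
apply: le_trans CS _.
rewrite mulrA mulr_sumr; apply: ler_sum => j _.
have P : 0 < NC%:R * w j.
  by rewrite mulr_gt0 // ltr0n (leq_ltn_trans _ (ltn_ord j)).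
have hj : alpha * NC%:R <= (w j)^-1.
  have := ltW (ha j); rewrite -/(w j) -[(_ * _)^-1]mul1r ler_pdivlMr // => h.
  by rewrite -[(w j)^-1]mul1r ler_pdivlMr // -mulrA.
apply: le_trans (ler_wpM2r (sqr_ge0 (s j)) hj) _.
by rewrite expr2 le_eqVlt; apply/orP; left; apply/eqP; ring.
Qed.

Lemma proto_entry (R : realType) (d n NC : nat) (z : 'I_n -> 'rV[R]_d)
  (y : 'I_n -> 'I_NC) j k :
  prototype z y j 0 k = (#|class_idx y j|%:R)^-1 * \sum_(l < n | y l == j) z l 0 k.
Proof. by rewrite /prototype mxE summxE. Qed.

Lemma loss_ge0 (R : realType) (d n NC : nat) (z : 'I_n -> 'rV[R]_d)
  (y : 'I_n -> 'I_NC) : 0 <= ncc_loss z y.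
Proof.
rewrite /ncc_loss mulNr -mulrN mulr_ge0 ?invr_ge0 ?ler0n // oppr_ge0.
apply: sumr_le0 => i _; apply: ln_le0.
have Sp : 0 < \sum_(j < NC) expR (cos_sim (z i) (prototype z y j)).
  by rewrite (bigD1 (y i)) //= ltr_pwDl ?expR_gt0 // sumr_ge0 // => j _; rewrite ltW ?expR_gt0.
by rewrite ler_pdivrMr // mul1r (bigD1 (y i)) //= lerDl sumr_ge0 // => j _;
  rewrite ltW ?expR_gt0.
Qed.

Theorem theorem1 (R : realType) (d n NC : nat) (z : 'I_n -> 'rV[R]_d)
  (y : 'I_n -> 'I_NC) (alpha : R) :
  (0 < n)%N ->
  (forall i, norm2 (z i) = 1) ->
  (forall j : 'I_NC, exists i : 'I_n, y i = j) ->
  0 <= alpha ->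
  (forall j : 'I_NC, alpha < (NC%:R * #|class_idx y j|%:R)^-1) ->
  ncc_loss z y >=
    - (n%:R)^-1 * \sum_(i < n) dotp (z i) (prototype z y (y i))
    + alpha / n%:R * \sum_(i < n) \sum_(k < n) dotp (z i) (z k).
Proof.
move=> n0 _ surj a0 ha.
apply: le_trans _ (@loss_ge0 _ _ _ _ z y).
have B : \sum_(i < n) \sum_(k < n) dotp (z i) (z k) =
         \sum_(c < d) (\sum_(i < n) z i 0 c) ^+ 2.
  rewrite /dotp; symmetry.
  under eq_bigr => c _ do rewrite expr2 mulr_suml.
  under eq_bigr => c _ do under eq_bigr => i _ do rewrite mulr_sumr.
  rewrite exchange_big; apply: eq_bigr => i _; exact: exchange_big.
have A : \sum_(i < n) dotp (z i) (prototype z y (y i)) =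
   \sum_(c < d) \sum_(i < n) z i 0 c * ((#|class_idx y (y i)|%:R)^-1 *
                      \sum_(l < n | y l == y i) z l 0 c).
  rewrite /dotp exchange_big /=; apply: eq_bigr => c _.
  by apply: eq_bigr => i _; rewrite proto_entry.
rewrite A B.
have K : alpha * \sum_(c < d) (\sum_(i < n) z i 0 c) ^+ 2 <=
   \sum_(c < d) \sum_(i < n) z i 0 c * ((#|class_idx y (y i)|%:R)^-1 *
                      \sum_(l < n | y l == y i) z l 0 c).
  rewrite mulr_sumr; apply: ler_sum => c _; exact: key.
have np : 0 < (n%:R : R)^-1 by rewrite invr_gt0 ltr0n.
have h := ler_wpM2l (ltW np) K.
rewrite -subr_ge0 in h; rewrite -oppr_ge0; move: h.
by congr (0 <= _); ring.
Qed.
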